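(* Let $\mathcal{A}=(Q,\gamma,W)$ be a one-dimensional pVASS and let $R\neq\emptyset$ be a type II region of $\mathcal{A}$. Then every configuration of $\mathit{pre}^*(R)$ can reach a configuration of $R$ in at most $4|Q|^3$ transitions.
   Context: A one-dimensional pVASS is $\mathcal{A}=(Q,\gamma,W)$ with $Q$ a finite set of control states, rules $\gamma\subseteq Q\times\{-1,0,1\}\times Q$ and weights $W:\gamma\to\mathbb{N}^+$. Configurations are $p(k)\in Q\times\mathbb{N}$. A rule $(p,\kappa,q)$ is enabled in $p(k)$ unless $\kappa=-1$ and $k=0$; a transition $p(k)\to q(k+\kappa)$ exists for each enabled rule, and a configuration with no enabled rule has only a self-loop. $\mathit{post}^*(X)$/$\mathit{pre}^*(X)$ are the sets of configurations reachable from / able to reach $X$. $\mathscr{C}_\mathcal{A}$ is the finite Markov chain on $Q$ with a transition $p\to q$ for each rule $(p,\kappa,q)$ (probability proportional to weight); BSCC = bottom strongly connected component. For $p$ in a BSCC of $\mathscr{C}_\mathcal{A}$, the type II region determined by $p$ is $\mathit{post}^*(p(0))$ if this set is infinite and contained in $\mathit{pre}^*(p(0))$, and $\emptyset$ otherwise. *)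

(* Defs.v *)
From mathcomp Require Import all_boot all_order all_algebra.
Set Implicit Arguments. Unset Strict Implicit. Unset Printing Implicit Defensive.

Record pVASS (Q : finType) := PVASS {
  rule : Q -> int -> Q -> bool;
  weight : Q -> int -> Q -> nat;
  rule_dir : forall p k q, rule p k q -> k \in [:: (-1)%R; 0%R; 1%R];
  weight_pos : forall p k q, rule p k q -> (0 < weight p k q)%N
}.

Definition conf (Q : finType) := (Q * nat)%type.

Definition enabled (Q : finType) (A : pVASS Q) (c : conf Q) (k : int) (q : Q) :=
  rule A c.1 k q && ~~ ((k == (-1)%R) && (c.2 == 0%N)).

Definition step (Q : finType) (A : pVASS Q) (c c' : conf Q) : Prop :=
  (exists (k : int) (q : Q), enabled A c k q /\ c'.1 = q /\
      (c'.2%:Z = c.2%:Z + k)%R)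
  \/ ((forall (k : int) (q : Q), ~~ enabled A c k q) /\ c' = c).

Fixpoint steps (Q : finType) (A : pVASS Q) (n : nat) (c c' : conf Q) : Prop :=
  match n with
  | 0 => c = c'
  | n'.+1 => exists c'', step A c c'' /\ steps A n' c'' c'
  end.

Definition reach (Q : finType) (A : pVASS Q) (c c' : conf Q) : Prop :=
  exists n, steps A n c c'.

Definition post_star (Q : finType) (A : pVASS Q) (X : conf Q -> Prop) : conf Q -> Prop :=
  fun c' => exists c, X c /\ reach A c c'.

Definition pre_star (Q : finType) (A : pVASS Q) (X : conf Q -> Prop) : conf Q -> Prop :=
  fun c => exists c', X c' /\ reach A c c'.

Definition infinite_set (Q : finType) (X : conf Q -> Prop) : Prop :=
  ~ (exists s : seq (conf Q), forall c, X c -> c \in s).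

(* The finite Markov chain C_A on Q: an edge p -> q for each rule (p,kappa,q)
   (with probability proportional to the weight; positive weights, so the
   underlying graph is as follows). *)
Definition chain_edge (Q : finType) (A : pVASS Q) : rel Q :=
  fun p q => [exists k : 'I_3, rule A p ((k : nat)%:Z - 1)%R q].

Definition BSCC (Q : finType) (A : pVASS Q) (B : {set Q}) : Prop :=
  B != set0 /\
  (forall p q, p \in B -> q \in B -> connect (chain_edge A) p q) /\
  (forall p q, p \in B -> chain_edge A p q -> q \in B).

Definition in_BSCC (Q : finType) (A : pVASS Q) (p : Q) : Prop :=
  exists B, BSCC A B /\ p \in B.

Definition init (Q : finType) (p : Q) : conf Q -> Prop := fun c => c = (p, 0%N).

Definition typeII_region_of (Q : finType) (A : pVASS Q) (p : Q) (c : conf Q) : Prop :=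
  (infinite_set (post_star A (init p)) /\
   (forall d, post_star A (init p) d -> pre_star A (init p) d)) /\
  post_star A (init p) c.

Definition is_typeII_region (Q : finType) (A : pVASS Q) (R : conf Q -> Prop) : Prop :=
  exists p, in_BSCC A p /\ forall c, R c <-> typeII_region_of A p c.

(* Main.v *)
Require Import Defs.
From mathcomp Require Import all_boot all_order all_algebra.
From mathcomp Require Import zify.
From Stdlib Require Import Classical ClassicalEpsilon.
Set Implicit Arguments. Unset Strict Implicit. Unset Printing Implicit Defensive.

Section Basic.
Variables (Q : finType) (A : pVASS Q).

Definition step' (c d : conf Q) : Prop :=
  (exists (k : int) (q : Q), enabled A c k q /\ d.1 = q /\ (d.2%:Z = c.2%:Z + k)%R) \/ d = c.
Definition run (f : nat -> conf Q) (m : nat) := forall i, i < m -> step' (f i) (f i.+1).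
Definition rr c d := exists f m, [/\ f 0 = c, f m = d & run f m].
Definition up (j : nat) (x : conf Q) : conf Q := (x.1, x.2 + j).
Definition down (j : nat) (x : conf Q) : conf Q := (x.1, x.2 - j).

Lemma dir p k q : rule A p k q -> [\/ k = (-1)%R, k = 0%R | k = 1%R].
Proof.
move/rule_dir; rewrite !inE => /or3P [/eqP->|/eqP->|/eqP->].
- by apply: Or31. - by apply: Or32. - by apply: Or33.
Qed.

Lemma step'_bound c d : step' c d -> d.2 <= c.2.+1 /\ c.2 <= d.2.+1.
Proof.
case=> [[k [q [/andP [Hr _] [_ He]]]]|->]; last by split.
by case: (dir Hr) => Hk; subst k; split; lia.
Qed.

Lemma step'_up j c d : step' c d -> step' (up j c) (up j d).
Proof.
case=> [[k [q [/andP [Hr Hn] [H1 He]]]]|->]; last by right.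
left; exists k, q; split; last by split=> //=; lia.
apply/andP; split=> //=; apply: contra Hn => /andP [-> /eqP H].
apply/eqP; lia.
Qed.

Lemma step'_down j c d : j <= c.2 -> j <= d.2 -> step' c d -> step' (down j c) (down j d).
Proof.
move=> Hc Hd.
case=> [[k [q [/andP [Hr Hn] [H1 He]]]]|->]; last by right.
left; exists k, q; split; last by split=> //=; lia.
apply/andP; split=> //=; apply/negP => /andP [/eqP Hk /eqP H].
subst k; lia.
Qed.

Lemma rr_refl c : rr c c.
Proof. by exists (fun _ => c), 0; split=> // i. Qed.

Lemma rr_step c d : step' c d -> rr c d.
Proof.
move=> H; exists (fun i => if i is 0 then c else d), 1; split=> // i.
by case: i.
Qed.

Lemma rr_trans c d e : rr c d -> rr d e -> rr c e.
Proof.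
move=> [f1 [m1 [H10 H1m H1]]] [f2 [m2 [H20 H2m H2]]].
exists (fun i => if i <= m1 then f1 i else f2 (i - m1)), (m1 + m2); split.
- by rewrite leq0n.
- case: ifP => Hle.
  + have Hm2 : m2 = 0 by lia.
    by subst m2; rewrite addn0 H1m -H2m H20.
  + by rewrite addKn.
- move=> i Hi.
  case: (ltnP i m1) => Hlt.
  + have -> : i <= m1 by lia.
    by apply: H1.
  + rewrite /=.
    have -> : f2 (i.+1 - m1) = f2 (i - m1).+1 by congr f2; lia.
    have -> : (if i <= m1 then f1 i else f2 (i - m1)) = f2 (i - m1).
      case: ifP => // Hle; have -> : i = m1 by lia.
      by rewrite subnn H1m H20.
    apply: H2; lia.
Qed.

Lemma rr_up j c d : rr c d -> rr (up j c) (up j d).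
Proof.
move=> [f [m [H0 Hm H]]]; exists (fun i => up j (f i)), m; split.
- by rewrite H0. - by rewrite Hm. - by move=> i Hi; apply: step'_up; apply: H.
Qed.

Lemma run_sub f m i i' : run f m -> i <= i' -> i' <= m -> rr (f i) (f i').
Proof.
move=> H Hii Him; exists (fun k => f (i + k)), (i' - i); split.
- by rewrite addn0. - by congr f; lia.
- move=> k Hk; rewrite addnS; apply: H; lia.
Qed.

Lemma run_steps f m : run f m -> exists n, n <= m /\ steps A n (f 0) (f m).
Proof.
elim: m f => [|m IH] f H; first by exists 0.
have [n [Hn Hs]] : exists n, n <= m /\ steps A n (f 1) (f m.+1).
  by apply: (IH (fun i => f i.+1)) => i Hi; apply: H.
case: (H 0 isT) => [Hst|Heq].
- exists n.+1; split=> //; exists (f 1); split=> //; by left.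
- by exists n; split; [lia | rewrite -Heq].
Qed.

Lemma steps_run n c d : steps A n c d -> exists f, [/\ f 0 = c, f n = d & run f n].
Proof.
elim: n c => [|n IH] c /=; first by move=> ->; exists (fun _ => d).
move=> [c'' [Hst Hs]]; have [f [H0 Hn H]] := IH _ Hs.
exists (fun i => if i is i'.+1 then f i' else c); split=> //.
move=> [|i] Hi /=.
- rewrite H0; case: Hst => [H1|[_ ->]]; [by left | by right].
- by apply: H.
Qed.

Lemma reach_rr c d : reach A c d <-> rr c d.
Proof.
split.
- move=> [n Hs]; have [f [H0 Hn H]] := steps_run Hs; by exists f, n.
- move=> [f [m [H0 Hm H]]]; have [n [_ Hs]] := run_steps H.
  by exists n; rewrite -H0 -Hm.
Qed.

End Basic.


Section Graph.
Variables (Q : finType) (A : pVASS Q).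

Lemma edge_rule p k q : rule A p k q -> chain_edge A p q.
Proof.
move=> Hr; apply/existsP; case: (dir Hr) => Hk; subst k.
- by exists (@Ordinal 3 0 isT).
- by exists (@Ordinal 3 1 isT).
- by exists (@Ordinal 3 2 isT).
Qed.

Lemma rule_edge p q : chain_edge A p q -> exists k, rule A p k q.
Proof. by move/existsP => [k Hk]; eexists; exact: Hk. Qed.

Lemma rr_connect c d : rr A c d -> connect (chain_edge A) c.1 d.1.
Proof.
move=> [f [m [H0 Hm H]]]; rewrite -H0 -Hm; clear H0 Hm.
elim: m H => [|m IH] H; first exact: connect0.
apply: connect_trans (IH _) _; first by move=> i Hi; apply: H; lia.
case: (H m (ltnSn m)) => [[k [q [/andP [Hr _] [-> _]]]]|->]; last exact: connect0.
by apply: connect1; apply: edge_rule Hr.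
Qed.

Lemma back_path q (sq : seq Q) : path (chain_edge A) q sq ->
  forall k, size sq <= k -> exists c, k <= c + size sq /\ rr A (q, c) (last q sq, k).
Proof.
elim: sq q => [|y sq IH] q /=.
- move=> _ k _; exists k; split; [lia | exact: rr_refl].
- move=> /andP [Hqy Hp] k Hk.
  have [c' [Hc' Hrr]] := IH y Hp k (ltnW Hk).
  have [kk Hr] := rule_edge Hqy.
  case: (dir Hr) => Hkk; subst kk.
  + exists c'.+1; split; first lia.
    apply: rr_trans Hrr; apply: rr_step; left; exists (-1)%R, y.
    split; last by split=> //=; lia.
    by rewrite /enabled /= Hr.
  + exists c'; split; first lia.
    apply: rr_trans Hrr; apply: rr_step; left; exists 0%R, y.
    split; last by split=> //=; lia.
    by rewrite /enabled /= Hr.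
  + exists c'.-1; split; first lia.
    apply: rr_trans Hrr; apply: rr_step; left; exists 1%R, y.
    split; last by split=> //=; lia.
    by rewrite /enabled /= Hr.
Qed.

Lemma short_path p s : connect (chain_edge A) p s ->
  exists sq, [/\ path (chain_edge A) p sq, last p sq = s & size sq < #|Q|].
Proof.
move/connectP => [sq0 Hp ->].
case: (shortenP Hp) => sq Hp' Hu _.
exists sq; split=> //.
have := card_uniqP Hu; move=> Hc.
have := max_card (mem (p :: sq)); rewrite Hc /=; lia.
Qed.

End Graph.

Lemma first_idx (P : pred nat) i0 : P i0 ->
  exists i, [/\ i <= i0, P i & forall j, j < i -> ~~ P j].
Proof.
move=> H0; have exP : exists n, P n by exists i0.
case: (ex_minnP exP) => i Pi Hmin; exists i; split=> //; first exact: Hmin.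
move=> j Hj; apply/negP => Pj; have := Hmin j Pj; lia.
Qed.

Lemma last_idx (P : pred nat) m i0 : i0 <= m -> P i0 ->
  exists i, [/\ i0 <= i, i <= m, P i & forall j, i < j -> j <= m -> ~~ P j].
Proof.
move=> Him H0.
pose P' := fun j => P j && (j <= m).
have exP : exists n, P' n by exists i0; rewrite /P' H0 Him.
have ubP : forall i, P' i -> i <= m by move=> i /andP [].
case: (ex_maxnP exP ubP) => i /andP [Pi Hi] Hmax; exists i; split=> //.
- by apply: Hmax; rewrite /P' H0 Him.
- move=> j Hij Hjm; apply/negP => Pj; have := Hmax j; rewrite /P' Pj Hjm.
  move=> /(_ isT); lia.
Qed.

Lemma choice_nat (H : nat -> nat -> Prop) : (forall l, exists i, H l i) ->
  exists g : nat -> nat, forall l, H l (g l).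
Proof.
move=> Hex; exists (fun l => proj1_sig (constructive_indefinite_description _ (Hex l))).
by move=> l; case: (constructive_indefinite_description _ (Hex l)).
Qed.

Lemma pigeon (Q : finType) (P : nat) (h : nat -> Q) : 0 < P ->
  exists a b d, [/\ a < b, b <= #|Q| * P, h a = h b & b = a + d * P].
Proof.
move=> HP.
pose F := fun x : 'I_(#|Q| * P).+1 => (h x, Ordinal (ltn_pmod x HP)).
have : ~~ injectiveb F.
  apply/negP => /injectiveP Hinj; have := leq_card F Hinj.
  by rewrite card_prod !card_ord ltnn.
move/injectivePn => [x [y Hxy HF]].
case: HF => Hh Hm.
have Hxy' : (x : nat) != y by [].
wlog Hlt : x y Hxy Hxy' Hh Hm / x < y.
  move=> Hw; case: (ltngtP x y) => H.
  - exact: (Hw x y).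
  - apply: (Hw y x) => //; by rewrite eq_sym.
  - by move: Hxy'; rewrite H eqxx.
have Hdvd : P %| y - x by rewrite -eqn_mod_dvd ?(ltnW Hlt) //; apply/eqP.
exists x, y, ((y - x) %/ P); split=> //; first by have := ltn_ord y; lia.
rewrite divnK //; lia.
Qed.


Lemma pairE (T1 T2 : Type) (x : T1 * T2) : x = (x.1, x.2).
Proof. by case: x. Qed.

Section Region.
Variables (Q : finType) (A : pVASS Q) (p : Q).
Hypothesis HR2 : forall c, rr A (p, 0) c -> rr A c (p, 0).

Local Notation InR c := (rr A (p, 0) c).

Lemma rr_up' j q k q' k' : rr A (q, k) (q', k') -> rr A (q, k + j) (q', k' + j).
Proof. by move/(rr_up j). Qed.

Lemma comb e b : InR (p, e) -> 0 < e -> rr A (p, b) (p, 0) -> InR (p, b).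
Proof.
move=> He He0 Hb.
have Hmul : forall j, InR (p, j * e).
  elim=> [|j IH]; first by rewrite mul0n; exact: rr_refl.
  apply: rr_trans IH _; rewrite mulSn.
  have H' := rr_up' (j * e) He; rewrite add0n in H'; exact H'.
have Hdown : forall j, rr A (p, b * j.+1) (p, b).
  elim=> [|j IH]; first by rewrite muln1; exact: rr_refl.
  apply: rr_trans _ IH; rewrite mulnS.
  have H' := rr_up' (b * j.+1) Hb; rewrite add0n in H'; exact H'.
case: e He He0 {Hmul} (Hmul b) => // e' He _ H1.
apply: rr_trans H1 _; exact: Hdown.
Qed.

Lemma small_period q K : InR (q, K) -> #|Q| <= K ->
  exists P, 0 < P <= #|Q| /\ InR (p, P).
Proof.
move=> [f [M [H0 HM Hrun]]] HK.
pose n := #|Q|.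
have Hex : forall t, exists i, t <= n ->
    [/\ i <= M, (f i).2 = t & forall j, j < i -> (f j).2 < t].
  move=> t; case: (leqP t n) => Htn; last by exists 0.
  have Pm : t <= (f M).2 by rewrite HM /=; lia.
  have [i [HiM Pi Hmin]] := @first_idx (fun i => t <= (f i).2) M Pm.
  exists i => _; split=> //; last by move=> j /Hmin; rewrite -ltnNge.
  case: i HiM Pi Hmin => [|i] HiM Pi Hmin.
  - by move: Pi; rewrite H0 /=; lia.
  - have := Hmin i (ltnSn i); rewrite -ltnNge => Hi.
    have [H1 _] := step'_bound (Hrun i HiM); lia.
have [g Hg] := choice_nat Hex.
have [a [b [d [Hab Hbn Hh _]]]] := pigeon (fun t => (f (g t)).1) (ltn0Sn 0).
rewrite muln1 in Hbn.
have Han : a <= n by lia.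
have [Hga1 Hga2 Hga3] := Hg a Han.
have [Hgb1 Hgb2 Hgb3] := Hg b Hbn.
have Hgab : g a < g b.
  case: (ltngtP (g a) (g b)) => // H.
  - have := Hga3 _ H; lia.
  - by move: Hga2; rewrite H Hgb2; lia.
have Ea : f (g a) = ((f (g a)).1, a) by rewrite [LHS]pairE Hga2.
have Eb : f (g b) = ((f (g a)).1, b) by rewrite [LHS]pairE Hgb2 /= Hh.
have InRa : InR (f (g a)) by rewrite -H0; apply: run_sub Hrun _ _.
have InRb : InR (f (g b)) by rewrite -H0; apply: run_sub Hrun _ _.
exists (b - a); split; first by lia.
apply: rr_trans InRb _; rewrite Eb.
have H2 := HR2 InRa; rewrite Ea in H2.
have H3 := rr_up' (b - a) H2; rewrite add0n in H3.
have E : a + (b - a) = b by lia.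
by rewrite E in H3.
Qed.

Section Period.
Variable P : nat.
Hypothesis HP : 0 < P.
Hypothesis HpP : InR (p, P).

Lemma up_R1 s k : InR (s, k) -> InR (s, k + P).
Proof.
move=> H; apply: rr_trans HpP _.
have H' := rr_up' P H; rewrite add0n in H'; exact H'.
Qed.

Lemma up_R s k d : InR (s, k) -> InR (s, k + d * P).
Proof.
move=> H; elim: d => [|d IH]; first by rewrite addn0.
have H' := up_R1 IH.
have E : k + d.+1 * P = k + d * P + P by rewrite mulSn; lia.
by rewrite E.
Qed.

Lemma down_R s k : InR (s, k) -> P + (#|Q| - 1) <= k -> InR (s, k - P).
Proof.
move=> H Hk.
have Hc := rr_connect H; rewrite /= in Hc.
have [sq [Hp Hl Hsz]] := short_path Hc.
have Hsk : size sq <= k - P by lia.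
have [c [_ Hrr]] := back_path Hp Hsk; rewrite Hl in Hrr.
have H1 := rr_up' P Hrr; rewrite subnK in H1; last by lia.
have N := rr_trans H1 (HR2 H).
have Hc' := comb HpP HP N.
have H4 := rr_up' c (HR2 HpP); rewrite add0n addnC in H4.
exact: rr_trans Hc' (rr_trans H4 Hrr).
Qed.

Lemma down_R_mult s k d : InR (s, k) -> d * P + (#|Q| - 1) <= k -> InR (s, k - d * P).
Proof.
elim: d k => [|d IH] k H Hk; first by rewrite mul0n subn0.
have H' := down_R H (ltac:(rewrite mulSn in Hk; lia)).
have := IH _ H' (ltac:(rewrite mulSn in Hk; lia)).
by have -> : k - P - d * P = k - d.+1 * P by rewrite mulSn; lia.
Qed.

Definition good c m := exists f, [/\ f 0 = c, run A f m & InR (f m)].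

Lemma surgery f m i i' (phi : conf Q -> conf Q) : run A f m -> i < i' -> i' <= m ->
  phi (f i') = f i ->
  (forall j, i' <= j -> j < m -> step' A (phi (f j)) (phi (f j.+1))) ->
  InR (phi (f m)) -> good (f 0) (m - (i' - i)).
Proof.
move=> Hrun Hii Him Hphi Hst HR.
exists (fun j => if j <= i then f j else phi (f (j + (i' - i)))); split.
- by rewrite leq0n.
- move=> j Hj /=.
  have [Hji|Hji|Hji] : [\/ j < i, i < j | j = i].
    by case: (ltngtP j i) => H; [apply: Or31|apply: Or32|apply: Or33].
  + rewrite ifT; last by lia.
    rewrite ifT; last by lia.
    apply: Hrun; lia.
  + rewrite ifF; last by lia.
    rewrite ifF; last by lia.
    rewrite addSn; apply: Hst; lia.
  + subst j; rewrite ifT; last by lia.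
    rewrite ifF; last by lia.
    rewrite -Hphi; have -> : i.+1 + (i' - i) = i'.+1 by lia.
    apply: Hst; lia.
- case: ifP => Hle.
  + have Ei : m - (i' - i) = i by lia.
    have Em : i' = m by lia.
    by rewrite Ei -Hphi Em.
  + by have -> : m - (i' - i) + (i' - i) = m by lia.
Qed.

Lemma S1 f m i i' d : run A f m -> InR (f m) -> i < i' -> i' <= m ->
  (f i).1 = (f i').1 -> (f i).2 = (f i').2 + d * P -> good (f 0) (m - (i' - i)).
Proof.
move=> Hrun HR Hii Him E1 E2.
apply: (surgery (phi := up (d * P))) => //.
- by rewrite /up [f i]pairE E1 E2.
- by move=> j _ Hj; apply: step'_up; apply: Hrun.
- by rewrite [f m]pairE in HR; rewrite /up; apply: up_R.
Qed.

Lemma S2 f m i i' d : run A f m -> InR (f m) -> i < i' -> i' <= m ->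
  (f i).1 = (f i').1 -> (f i').2 = (f i).2 + d * P ->
  (forall j, i' <= j -> j <= m -> d * P <= (f j).2) ->
  d * P + (#|Q| - 1) <= (f m).2 ->
  good (f 0) (m - (i' - i)).
Proof.
move=> Hrun HR Hii Him E1 E2 Hge Hm.
apply: (surgery (phi := down (d * P))) => //.
- by rewrite /down [f i]pairE E1 E2 addnK.
- move=> j Hj1 Hj2; apply: step'_down; [apply: Hge; lia | apply: Hge; lia | apply: Hrun; lia].
- by rewrite [f m]pairE in HR; rewrite /down; apply: down_R_mult.
Qed.

Lemma bound c m : P <= #|Q| -> good c m -> (forall m', m' < m -> ~ good c m') ->
  m <= 4 * #|Q| ^ 3.
Proof.
move=> HPn [f [H0 Hrun HR]] Hmin.
have Hn : 0 < #|Q| by apply/card_gt0P; exists p.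
have nogood : forall m', m' < m -> good (f 0) m' -> False.
  by move=> m' Hm' Hg; apply: (Hmin m' Hm'); rewrite -H0.
have Hst : forall j, j < m -> (f j.+1).2 <= (f j).2.+1 /\ (f j).2 <= (f j.+1).2.+1.
  by move=> j Hj; apply: step'_bound; apply: Hrun.
have Hdist : forall j j', j < j' -> j' <= m -> f j <> f j'.
  move=> j j' Hjj Hjm E; apply: (nogood (m - (j' - j))); first lia.
  by apply: (S1 (d := 0)) => //; rewrite E // mul0n addn0.
case: m Hrun HR Hmin nogood Hst Hdist => [|m'] Hrun HR Hmin nogood Hst Hdist; first by [].
set n := #|Q|.
have Hi : forall j, j <= m'.+1 -> (f 0).2 < (f j).2 + n * P.
  move=> j0 Hj0; rewrite ltnNge; apply/negP => Hc.
  have Hex : forall t, exists i, t <= n * P -> [/\ i <= m'.+1,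
      (f i).2 = (f 0).2 - n * P + t & forall j, j < i -> (f 0).2 - n * P + t < (f j).2].
    move=> t; case: (leqP t (n * P)) => Ht; last by exists 0.
    have Pj0 : (f j0).2 <= (f 0).2 - n * P + t by lia.
    have [i [Hij0 Pi Hmin']] := @first_idx (fun i => (f i).2 <= (f 0).2 - n * P + t) j0 Pj0.
    exists i => _; split; first lia; last by move=> j /Hmin'; rewrite -ltnNge.
    case: i Hij0 Pi Hmin' => [|i] Hij0 Pi Hmin'; first by move: Pi => /=; lia.
    have := Hmin' i (ltnSn i); rewrite -ltnNge => Hlt.
    have Hil : i < m'.+1 by lia.
    have [_ H2] := Hst i Hil; move: Pi => /=; lia.
  have [g Hg] := choice_nat Hex.
  have [a [b [d [Hab Hbn Hh Hd]]]] := pigeon (fun t => (f (g t)).1) HP.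
  have [Hga1 Hga2 Hga3] := Hg a (ltac:(lia)).
  have [Hgb1 Hgb2 Hgb3] := Hg b Hbn.
  have Hgab : g b < g a.
    case: (ltngtP (g b) (g a)) => // H.
    - have := Hgb3 _ H; lia.
    - by move: Hga2; rewrite -H Hgb2; lia.
  apply: (nogood (m'.+1 - (g a - g b))); first lia.
  apply: (S1 (d := d)) => //; lia.
have Hii : forall j, j <= m' -> (f j).2 < (f m').2 + n * P.
  move=> j0 Hj0; rewrite ltnNge; apply/negP => Hc.
  have Hex : forall t, exists i, t <= n * P -> [/\ i <= m',
      (f i).2 = (f m').2 + t & forall j, i < j -> j <= m' -> (f j).2 < (f m').2 + t].
    move=> t; case: (leqP t (n * P)) => Ht; last by exists 0.
    have Pj0 : (f m').2 + t <= (f j0).2 by lia.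
    have [i [Hj0i Him Pi Hmax]] := @last_idx (fun i => (f m').2 + t <= (f i).2) m' j0 Hj0 Pj0.
    exists i => _; split=> //; last by move=> j Hj1 Hj2; have := Hmax j Hj1 Hj2; rewrite -ltnNge.
    case: (ltnP i m') => Him'; last by (have E : i = m' by lia); rewrite E in Pi *; move: Pi => /=; lia.
    have := Hmax i.+1 (ltnSn i) Him'; rewrite -ltnNge => Hlt.
    have [_ H2] := Hst i (ltac:(lia)); move: Pi => /=; lia.
  have [g Hg] := choice_nat Hex.
  have [a [b [d [Hab Hbn Hh Hd]]]] := pigeon (fun t => (f (g t)).1) HP.
  have [Hga1 Hga2 Hga3] := Hg a (ltac:(lia)).
  have [Hgb1 Hgb2 Hgb3] := Hg b Hbn.
  have Hgab : g b < g a.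
    case: (ltngtP (g b) (g a)) => // H.
    - have := Hga3 _ H Hgb1; lia.
    - by move: Hga2; rewrite -H Hgb2; lia.
  apply: (nogood (m'.+1 - (g a - g b))); first lia.
  apply: (S1 (d := d)) => //; lia.
set L0 := maxn (f 0).2 (n - 1).
have Hiii : (f m').2 <= L0 + n * P.
  rewrite leqNgt; apply/negP => Hc.
  have Hex : forall t, exists i, t <= n * P -> [/\ i < m',
      (f i).2 = L0 + t & forall j, i < j -> j <= m' -> L0 + t < (f j).2].
    move=> t; case: (leqP t (n * P)) => Ht; last by exists 0.
    have P0 : (f 0).2 <= L0 + t by rewrite /L0; lia.
    have [i [_ Him Pi Hmax]] := @last_idx (fun i => (f i).2 <= L0 + t) m' 0 (leq0n _) P0.
    have Him' : i < m'.
      rewrite ltn_neqAle Him andbT; apply/eqP => E; move: Pi; rewrite E /=; lia.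
    exists i => _; split=> //; last by move=> j Hj1 Hj2; have := Hmax j Hj1 Hj2; rewrite -ltnNge.
    have := Hmax i.+1 (ltnSn i) Him'; rewrite -ltnNge => Hlt.
    have [H1 _] := Hst i (ltac:(lia)); move: Pi => /=; lia.
  have [g Hg] := choice_nat Hex.
  have [a [b [d [Hab Hbn Hh Hd]]]] := pigeon (fun t => (f (g t)).1) HP.
  have [Hga1 Hga2 Hga3] := Hg a (ltac:(lia)).
  have [Hgb1 Hgb2 Hgb3] := Hg b Hbn.
  have Hgab : g a < g b.
    case: (ltngtP (g a) (g b)) => // H.
    - have := Hgb3 _ H (ltnW Hga1); lia.
    - by move: Hga2; rewrite H Hgb2; lia.
  have [_ Hmm'] := Hst m' (ltnSn m').
  apply: (nogood (m'.+1 - (g b - g a))); first lia.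
  apply: (S2 (d := d)) => //; first lia.
  - by rewrite Hga2 Hgb2 Hd; lia.
  - move=> j Hj1 Hj2.
    case: (ltnP m' j) => Hj3.
    + have -> : j = m'.+1 by lia.
      rewrite /L0 in Hc Hgb2; lia.
    + case: (ltngtP (g b) j) => Hj4.
      * have := Hgb3 j Hj4 Hj3; lia.
      * lia.
      * by rewrite -Hj4 Hgb2; lia.
  - rewrite /L0 in Hc Hgb2 *; lia.
set lo := (f 0).2.+1 - n * P.
set W := L0 + 2 * (n * P) - lo.
have HW : forall j, j < m'.+1 -> (f j).2 - lo < W.
  move=> j Hj.
  have := Hi j (ltnW Hj); have := Hii j (ltac:(lia)).
  rewrite /W /lo; lia.
pose F := fun j : 'I_m'.+1 => ((f j).1, Ordinal (HW j (ltn_ord j))).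
have Finj : injective F.
  move=> x y [E1 E2].
  have Ex : lo <= (f x).2 by have := Hi x (ltnW (ltn_ord x)); rewrite /lo; lia.
  have Ey : lo <= (f y).2 by have := Hi y (ltnW (ltn_ord y)); rewrite /lo; lia.
  have E : f x = f y by rewrite [f x]pairE [f y]pairE E1; congr pair; lia.
  apply: val_inj => /=.
  case: (ltngtP x y) => // H.
  - by exfalso; apply: (Hdist x y H (ltnW (ltn_ord y))).
  - by exfalso; apply: (Hdist y x H (ltnW (ltn_ord x))); rewrite E.
have := leq_card F Finj; rewrite card_prod !card_ord -/n => Hm.
have HnP : n * P <= n * n by rewrite leq_mul2l HPn orbT.
have HW2 : W <= 3 * (n * n) + n by rewrite /W /lo /L0; lia.
have Hnn : n * n <= n * (n * n) by rewrite leq_pmull.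
apply: (leq_trans Hm).
apply: (leq_trans (leq_mul (leqnn n) HW2)).
rewrite expnS expnS expn1; nia.
Qed.

End Period.
End Region.


Theorem mainTheorem6 (Q : finType) (A : pVASS Q) (R : conf Q -> Prop) :
  is_typeII_region A R -> (exists c, R c) ->
  forall c, pre_star A R c ->
  exists (n : nat) (c' : conf Q), (n <= 4 * #|Q| ^ 3)%N /\ steps A n c c' /\ R c'.
Proof.
move=> [p [_ HRiff]] [c0 Hc0] c [c' [Hc' Hreach]].
have [[Hinf Hsub] _] := (HRiff c0).1 Hc0.
have HRe : forall d, R d <-> rr A (p, 0) d.
  move=> d; split.
  - move=> /HRiff [_ [x [Hx Hr]]]; rewrite /init in Hx; subst x; exact/reach_rr.
  - move=> H; apply/HRiff; split=> //; exists (p, 0); split=> //; exact/reach_rr.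
have HR2 : forall d, rr A (p, 0) d -> rr A d (p, 0).
  move=> d H.
  have Hp : post_star A (init p) d by exists (p, 0); split=> //; exact/reach_rr.
  have [x [Hx Hr]] := Hsub d Hp; rewrite /init in Hx; subst x; exact/reach_rr.
have [q [K [HK HqK]]] : exists q K, #|Q| <= K /\ rr A (p, 0) (q, K).
  apply: NNPP => Hno; apply: Hinf.
  exists [seq (x, y) | x <- enum Q, y <- iota 0 #|Q|].
  move=> [x y] [z [Hz Hr]]; rewrite /init in Hz; subst z.
  apply: allpairs_f; first by rewrite mem_enum.
  rewrite mem_iota /= add0n ltnNge; apply/negP => Hy; apply: Hno.
  exists x, y; split=> //; exact/reach_rr.
have [P [/andP [HP0 HPn] HpP]] := small_period HR2 HqK HK.
have [f [m [H0 Hm Hrun]]] := (reach_rr A c c').1 Hreach.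
have Hg : good A p c m by exists f; split=> //; rewrite Hm; apply/HRe.
have [m0 [Hg0 Hmin]] : exists m0, good A p c m0 /\ forall m', m' < m0 -> ~ good A p c m'.
  elim/ltn_ind: m Hg {H0 Hm Hrun} => m IH Hgm.
  case: (classic (exists m', m' < m /\ good A p c m')) => [[m' [Hlt Hg']] | Hno].
  - exact: IH m' Hlt Hg'.
  - by exists m; split=> // m' Hlt Hg'; apply: Hno; exists m'.
have Hb := bound HR2 HP0 HpP HPn Hg0 Hmin.
have [f0 [H00 Hrun0 HR0]] := Hg0.
have [n [Hn Hs]] := run_steps Hrun0.
exists n, (f0 m0); split; first exact: leq_trans Hn Hb.
by split; [rewrite -H00 | apply/HRe].
Qed.
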